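(* For every $k\ge2$ and every $n\ge1$, the families $\mathrm{SLT}_k$ and $\mathrm{RL}_n^V$ are incomparable (neither is contained in the other); likewise, for every $n\ge1$, $\mathrm{SLT}$ and $\mathrm{RL}_n^V$ are incomparable.
   Context: Strictly locally testable languages: let $V$ be an alphabet and $k\ge1$. For $B,I,E\subseteq V^k$ and $F\subseteq V^{\le k-1}$, $\mathrm{slt}(B,I,E,F)$ is the language over $V$ consisting of all words in $F$ together with all words $a_1\cdots a_n$ ($a_i\in V$, $n\ge k$) with $a_1\cdots a_k\in B$, $a_{j+1}\cdots a_{j+k}\in I$ for all $1\le j\le n-k-1$, and $a_{n-k+1}\cdots a_n\in E$. $\mathrm{SLT}_k$ is the family of languages of this form and $\mathrm{SLT}=\bigcup_{k\ge1}\mathrm{SLT}_k$. A right-linear grammar is $G=(N,T,P,S)$ with rules $A\to wB$ or $A\to w$ ($A,B\in N$, $w\in T^*$). For a regular language $L$, $\mathrm{Var}_{RL}(L)$ is the minimum of $|N|$ over all right-linear grammars generating $L$; $\mathrm{RL}_n^V=\{L\text{ regular}:\mathrm{Var}_{RL}(L)\le n\}$. *)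

(* Defs.v *)
From mathcomp Require Import all_boot.
Set Implicit Arguments. Unset Strict Implicit. Unset Printing Implicit Defensive.

Definition lang (V : Type) := seq V -> Prop.

(* slt(B,I,E,F) for window length k, following the paper literally:
   words of F, together with words a_1..a_n (n >= k) whose prefix of length k
   is in B, whose factors a_{j+1}..a_{j+k} (1 <= j <= n-k-1) are in I and whose
   suffix of length k is in E. *)
Definition slt (V : Type) (k : nat) (B I E F : lang V) : lang V :=
  fun w => F w \/
    [/\ k <= size w, B (take k w),
        (forall j, 1 <= j -> j <= size w - k - 1 -> I (take k (drop j w)))
      & E (drop (size w - k) w)].

Definition SLTk (V : Type) (k : nat) (L : lang V) : Prop :=
  exists B I E F : lang V,
    [/\ (forall x, B x -> size x = k), (forall x, I x -> size x = k),
        (forall x, E x -> size x = k), (forall x, F x -> size x <= k.-1)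
      & forall w, L w <-> slt k B I E F w].

Definition SLT (V : Type) (L : lang V) : Prop :=
  exists k, 1 <= k /\ SLTk k L.

(* Right-linear grammars with nonterminal set 'I_m (so |N| = m), start symbol S,
   terminal alphabet V, and a finite list of rules (A, w, Some B) for A -> wB
   and (A, w, None) for A -> w.  rl_derives P A w : A =>* w. *)
Inductive rl_derives (V : eqType) (m : nat)
    (P : seq ('I_m * seq V * option 'I_m)) : 'I_m -> seq V -> Prop :=
| rld_term A u : (A, u, None) \in P -> rl_derives P A u
| rld_step A u B w : (A, u, Some B) \in P -> rl_derives P B w ->
    rl_derives P A (u ++ w).

Definition generated_by_RLG (V : eqType) (m : nat) (L : lang V) : Prop :=
  exists (S : 'I_m) (P : seq ('I_m * seq V * option 'I_m)),
    forall w, L w <-> rl_derives P S w.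

(* RL_n^V: regular languages with Var_RL(L) <= n, i.e. generated by some
   right-linear grammar with at most n nonterminals (such languages are
   regular, and Var_RL(L) <= n iff such a grammar exists). *)
Definition RLnV (V : eqType) (n : nat) (L : lang V) : Prop :=
  exists m, m <= n /\ generated_by_RLG m L.

Definition not_included (Fam1 Fam2 : forall V : finType, lang V -> Prop) : Prop :=
  exists (V : finType) (L : lang V), Fam1 V L /\ ~ Fam2 V L.

Definition incomparable (Fam1 Fam2 : forall V : finType, lang V -> Prop) : Prop :=
  not_included Fam1 Fam2 /\ not_included Fam2 Fam1.

(* Main.v *)
Require Import Defs.
From mathcomp Require Import all_boot zify.
Set Implicit Arguments. Unset Strict Implicit. Unset Printing Implicit Defensive.

Definition maxlen (V : Type) (m : nat) (P : seq ('I_m * seq V * option 'I_m)) :=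
  foldr (fun r k => maxn (size r.1.2) k) 0 P.

Lemma maxlenP (V : eqType) m (P : seq ('I_m * seq V * option 'I_m)) r :
  r \in P -> size r.1.2 <= maxlen P.
Proof.
elim: P => //= r0 P IH; rewrite inE => /orP [/eqP ->|/IH H].
  by rewrite leq_max leqnn.
by rewrite leq_max H orbT.
Qed.

Section Gram.
Variables (V : eqType) (m : nat) (P : seq ('I_m * seq V * option 'I_m)).

Inductive reach : 'I_m -> seq V -> 'I_m -> Prop :=
| r0 A : reach A [::] A
| rS A u B w C : (A, u, Some B) \in P -> reach B w C -> reach A (u ++ w) C.

Lemma reach_trans A x B y C : reach A x B -> reach B y C -> reach A (x ++ y) C.
Proof.
elim=> [//|A0 u B0 w C0 h _ IH] hy.
by rewrite -catA; apply: rS h (IH hy).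
Qed.

Lemma reach_derives A x B y : reach A x B -> rl_derives P B y -> rl_derives P A (x ++ y).
Proof.
elim=> [//|A0 u B0 w C0 h _ IH] hy.
by rewrite -catA; apply: rld_step h (IH hy).
Qed.

Lemma derives_reach A w : rl_derives P A w ->
  exists x B u, [/\ reach A x B, (B, u, None) \in P & w = x ++ u].
Proof.
elim=> [A0 u h|A0 u B0 w0 h _ [x [B [u' [h1 h2 ->]]]]].
  by exists [::], A0, u; split=> //; apply: r0.
exists (u ++ x), B, u'; split=> //; last by rewrite catA.
exact: rS h h1.
Qed.

Inductive spath : 'I_m -> seq V -> 'I_m -> seq 'I_m -> Prop :=
| sp0 C : spath C [::] C [::]
| spS A u B w C s : (A, u, Some B) \in P -> spath B w C s -> spath A (u ++ w) C (A :: s).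

Lemma spath_reach A w C s : spath A w C s -> reach A w C.
Proof. elim=> [C0|A0 u B w0 C0 s0 h _ IH]; [exact: r0 | exact: rS h IH]. Qed.

Lemma spath_size A w C s : spath A w C s -> size w <= maxlen P * size s.
Proof.
elim=> [//|A0 u B w0 C0 s0 h _ IH].
rewrite size_cat /= mulnS leq_add //.
exact: (maxlenP h).
Qed.

Lemma spath_split B w C s A : spath B w C s -> A \in s ->
  exists x1 w2 s2, [/\ w = x1 ++ w2, reach B x1 A, spath A w2 C s2 & subseq s2 s].
Proof.
elim=> [//|A0 u B0 w0 C0 s0 h hs IH]; rewrite in_cons.
case: (eqVneq A A0) => [->|ne] H.
  exists [::], (u ++ w0), (A0 :: s0); split=> //; first exact: r0.
    exact: spS h hs.
have H2 : A \in s0 by move: H...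
have [x1 [w2 [s2 [-> h1 h2 h3]]]] := IH H2.
exists (u ++ x1), w2, s2; split=> //; first by rewrite catA.
  exact: rS h h1.
apply: subseq_trans h3 _; exact: subseq_cons.
Qed.

Definition pump A w C := exists x v y B,
  [/\ w = x ++ v ++ y, v != [::], reach A x B, reach B v B & reach B y C].

Lemma pump_or_spath A w C : reach A w C ->
  pump A w C \/ exists s, spath A w C s /\ uniq (C :: s).
Proof.
elim=> [A0|A0 u B w0 C0 h hr [[x [v [y [D [-> hv h1 h2 h3]]]]]|[s [hs hu]]]].
- by right; exists [::]; split=> //; apply: sp0.
- left; exists (u ++ x), v, y, D; split=> //; first by rewrite catA.
  exact: rS h h1.
- case: (eqVneq A0 C0) => [eAC|nAC].
    subst C0; case: (eqVneq (u ++ w0) [::]) => [e|ne].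
      by right; exists [::]; rewrite e; split=> //; apply: sp0.
    left; exists [::], (u ++ w0), [::], A0; split=> //; first by rewrite cats0.
    + exact: r0.
    + exact: rS h hr.
    + exact: r0.
  case: (boolP (A0 \in s)) => [As|nAs].
    have [x1 [w2 [s2 [ew h1 h2 h3]]]] := spath_split hs As.
    case: (eqVneq (u ++ x1) [::]) => [e|ne].
      right; exists s2; split.
        by rewrite ew catA e.
      apply: subseq_uniq hu; by rewrite /= eqxx.
    left; exists [::], (u ++ x1), w2, A0; split=> //.
    + by rewrite ew catA.
    + exact: r0.
    + exact: rS h h1.
    + exact: spath_reach h2.
  right; exists (A0 :: s); split; first exact: spS h hs.
  move: hu; rewrite /= in_cons negb_or eq_sym nAC nAs /=.
  by [].
Qed.

Lemma pumping A w C : reach A w C -> maxlen P * m < size w -> pump A w C.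
Proof.
case/pump_or_spath => // [[s [hs hu]]] hw.
have hsz : size (C :: s) <= m.
  by rewrite -(card_uniqP hu); apply: leq_trans (max_card _) _; rewrite card_ord.
have := spath_size hs.
have : maxlen P * size s <= maxlen P * m.
  by apply: leq_mul => //; apply: ltnW.
move=> a b; have := leq_trans b a; by rewrite leqNgt hw.
Qed.
End Gram.

Definition Lc (T : Type) (w : seq T) := exists (i : T) p, w = nseq p.+1 i.

Lemma lower_bound (N m : nat) (S : 'I_m) (P : seq ('I_m * seq 'I_N * option 'I_m)) :
  (forall w, Lc w <-> rl_derives P S w) -> N <= m.
Proof.
move=> HL.
set K := maxlen P.
pose Good (i : 'I_N) (B : 'I_m) := exists x v y,
  [/\ reach P S x B, reach P B v B, rl_derives P B y, v != [::] & all (pred1 i) v].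
have ex : forall i, exists B, Good i B.
  move=> i.
  have : Lc (nseq (K * m + K).+1 i) by exists i, (K * m + K).
  move/HL/derives_reach => [x [B0 [u [h1 h2 ew]]]].
  have hu := maxlenP h2; rewrite /= -/K in hu.
  have hx : K * m < size x.
    have hu2 : size u <= K by exact: hu.
    move: (congr1 size ew); rewrite size_nseq size_cat => e; clear -hu2 e; lia.
  have [x1 [v [y1 [B [ex hv r1 r2 r3]]]]] := pumping h1 hx.
  exists B, x1, v, (y1 ++ u); split=> //.
    by apply: reach_derives r3 _; apply: rld_term.
  have := all_pred1_nseq i (K * m + K).+1.
  by rewrite ew ex !all_cat => /andP [/andP [_ /andP [-> _]] _].
have [f hf] := fin_all_exists ex.
have inj : injective f.
  move=> i j e.
  have [xi [vi [yi [a1 a2 a3 a4 a5]]]] := hf i.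
  have [xj [vj [yj [b1 b2 b3 b4 b5]]]] := hf j.
  rewrite e in a1 a2 a3.
  have : rl_derives P S (xi ++ vi ++ vj ++ yi).
    apply: reach_derives a1 _; apply: reach_derives a2 _.
    by apply: reach_derives b2 _.
  move/HL => [c [p ec]].
  have := all_pred1_nseq c p.+1; rewrite -ec !all_cat.
  case/and4P => _ hvi hvj _.
  move: a4 a5 hvi b4 b5 hvj; clear -i j; move=> a4 a5 hvi b4 b5 hvj; move: a4 a5 hvi b4 b5 hvj.
  case: vi => // a vi _ /= /andP [/eqP -> _] /andP [/eqP -> _].
  by case: vj => // b vj _ /= /andP [/eqP -> _] /andP [/eqP -> _].
by have := leq_card f inj; rewrite !card_ord.
Qed.
Lemma window (T : eqType) k (w : seq T) c : 2 <= k -> k <= size w ->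
  (forall j, j <= size w - k -> exists d, take k (drop j w) = nseq k d) ->
  take k w = nseq k c -> w = nseq (size w) c.
Proof.
move=> hk hkw hW h0.
have hj : forall j, j <= size w - k -> take k (drop j w) = nseq k c.
  elim=> [_|j IH hj1]; first by rewrite drop0.
  have [d hd] := hW _ hj1.
  have IH' := IH (ltnW hj1).
  have e1 : nth c w (j + 1) = c.
    have k1 : 1 < k by lia.
    by rewrite -nth_drop -(@nth_take k) // IH' nth_nseq k1.
  have e2 : nth c w (j.+1 + 0) = d.
    have k0 : 0 < k by lia.
    by rewrite -nth_drop -(@nth_take k) // hd nth_nseq k0.
  by rewrite hd -e2 addn0 -addn1 e1.
apply: (eq_from_nth (x0 := c)); first by rewrite size_nseq.
move=> t ht.
rewrite nth_nseq ht.
have hm : minn t (size w - k) <= size w - k by rewrite geq_minr.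
have := hj _ hm => e.
have -> : t = minn t (size w - k) + (t - minn t (size w - k)) by lia.
rewrite -nth_drop -(@nth_take k) ?e ?nth_nseq; last by lia.
by case: ifP.
Qed.

Lemma Lc_SLT (T : eqType) k : 2 <= k -> SLTk k (@Lc T).
Proof.
move=> hk.
pose B := fun x : seq T => exists c, x = nseq k c.
exists B, B, B, (fun x => Lc x /\ size x <= k.-1); split.
- by move=> x [c ->]; rewrite size_nseq.
- by move=> x [c ->]; rewrite size_nseq.
- by move=> x [c ->]; rewrite size_nseq.
- by move=> x [].
move=> w; split.
  move=> [i [p ew]].
  case: (leqP p.+1 k.-1) => h.
    by left; split; [exists i, p | rewrite ew size_nseq].
  right; rewrite ew size_nseq; split.
  - lia.
  - by exists i; rewrite take_nseq //; lia.
  - by move=> j h1 h2; exists i; rewrite drop_nseq take_nseq //; lia.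
  - by exists i; rewrite drop_nseq; congr nseq; lia.
case=> [[]//|[hkw [c hc] hI hE]].
exists c, (size w).-1.
have -> : (size w).-1.+1 = size w by lia.
apply: (window hk hkw) (hc) => j hj.
case: (eqVneq j 0) => [->|j0]; first by rewrite drop0; exists c.
case: (eqVneq j (size w - k)) => [->|jn].
  rewrite take_oversize; [exact: hE | rewrite size_drop; lia].
by apply: hI; lia.
Qed.

Definition L2 (w : seq unit) := ~~ odd (size w).

Lemma ueq (x y : seq unit) : size x = size y -> x = y.
Proof. by elim: x y => [|[] x IH] [|[] y] //= [/IH ->]. Qed.

Definition P2 : seq ('I_1 * seq unit * option 'I_1) :=
  [:: (ord0, [:: tt; tt], Some ord0); (ord0, [::], None)].

Lemma L2_gen : generated_by_RLG 1 L2.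
Proof.
exists ord0, P2 => w; split.
  rewrite /L2 => hw.
  have -> : w = nseq ((size w)./2.*2) tt.
    by apply: ueq; rewrite size_nseq halfK (negbTE hw) subn0.
  elim: (size w)./2 => [|p IH].
    by apply: rld_term; rewrite !inE.
  rewrite doubleS /=.
  have -> : [:: tt, tt & nseq p.*2 tt] = [:: tt; tt] ++ nseq p.*2 tt by [].
  by apply: rld_step IH; rewrite !inE.
elim=> [A u|A u B w0 h _ IH].
  by rewrite !inE => /orP [/eqP []|/eqP [_ ->]].
move: h; rewrite !inE => /orP [/eqP [_ -> _]|/eqP []//].
by move: IH; rewrite /L2 /= negbK.
Qed.

Lemma L2_notSLT k : ~ SLTk k L2.
Proof.
move=> [B [I [E [F [hB hI hE hF hL]]]]].
pose w1 := nseq (k.*2.+2) tt.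
pose w2 := nseq (k.*2.+3) tt.
have : L2 w1 by rewrite /L2 size_nseq /= odd_double.
move/hL => [/hF|[h1 h2 h3 h4]].
  rewrite size_nseq; lia.
have : slt k B I E F w2.
  right; rewrite /w2 size_nseq; split.
  - lia.
  - move: h2; rewrite (@ueq (take k w1) (take k (nseq k.*2.+3 tt))) //.
    by rewrite !size_takel ?size_nseq //; lia.
  - move=> j j1 j2.
    have := h3 1 (leqnn 1); rewrite /w1 size_nseq => h; have {}h := h ltac:(lia).
    move: h; rewrite (@ueq (take k (drop 1 (nseq k.*2.+2 tt))) (take k (drop j (nseq k.*2.+3 tt)))) //.
    by rewrite !size_takel ?size_drop ?size_nseq //; lia.
  - move: h4; rewrite (@ueq (drop (size w1 - k) w1) (drop (k.*2.+3 - k) (nseq k.*2.+3 tt))) //.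
    by rewrite !size_drop ?size_nseq //; lia.
by move/hL; rewrite /L2 size_nseq /= odd_double.
Qed.

Theorem mainTheorem13 :
  (forall k n : nat, 2 <= k -> 1 <= n ->
     incomparable (fun V L => SLTk k L) (fun V L => RLnV n L)) /\
  (forall n : nat, 1 <= n ->
     incomparable (fun V L => SLT L) (fun V L => RLnV n L)).
Proof.
have nRL : forall n, ~ RLnV n (@Lc 'I_n.+1).
  move=> n [m [hm [S [P hP]]]].
  have := lower_bound hP; lia.
split.
  move=> k n hk hn; split.
    by exists ('I_n.+1 : finType), (@Lc _); split; [exact: Lc_SLT | exact: nRL].
  exists (unit : finType), L2; split; last exact: L2_notSLT.
  by exists 1; split=> //; exact: L2_gen.
move=> n hn; split.
  exists ('I_n.+1 : finType), (@Lc _); split; last exact: nRL.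
  by exists 2; split=> //; exact: Lc_SLT.
exists (unit : finType), L2; split; last by move=> [k [_ /L2_notSLT]].
by exists 1; split=> //; exact: L2_gen.
Qed.
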